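(* Assume $\operatorname{add}(\mathcal N)=\operatorname{cov}(\mathcal N)$. Then $\mathcal{ANM}_{\operatorname{add}(\mathcal N)}\setminus\mathcal{ND}_{\operatorname{add}(\mathcal N)}$ is strongly $\mathfrak c$-algebrable in $\left(\mathbb R^{[0,1]}\right)^{\operatorname{add}(\mathcal N)}$.
   Context: For a regular infinite cardinal $\kappa$, a $\kappa$-sequence $(x_\alpha)_{\alpha<\kappa}$ converges to $x$ if for every neighbourhood $U$ of $x$ there is $\alpha_0<\kappa$ with $x_\alpha\in U$ for all $\alpha_0<\alpha<\kappa$; $\left(\mathbb R^{[0,1]}\right)^{\kappa}$ is the commutative real algebra of $\kappa$-sequences of functions $[0,1]\to\mathbb R$ with indexwise operations. $\lambda$ is Lebesgue measure, $\mathcal N$ the null subsets of $[0,1]$; $\operatorname{add}(\mathcal N)$ the least cardinality of a family of null sets with non-null union, $\operatorname{cov}(\mathcal N)$ the least cardinality of a family of null sets covering $[0,1]$. $\mathcal{ANM}_{\kappa}$: $\kappa$-sequences of Lebesgue measurable $f_\alpha:[0,1]\to\mathbb R$ converging a.e. to a measurable $f$ but not converging in measure to $f$. $\mathcal{ND}_{\kappa}$: $\kappa$-sequences of Lebesgue measurable $f_\alpha:[0,1]\to\mathbb R$ dominated a.e. by a common integrable $g$, converging a.e. to an integrable $f$, with $\int|f_\alpha-f|\,d\lambda\not\to0$. $S$ is strongly $\mu$-algebrable if there is a set $X$ of $\mu$ algebraically independent elements such that every nonzero element of the (non-unital) algebra generated by $X$ belongs to $S$. *)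

(* Defs.v *)
From HB Require Import structures.
From mathcomp Require Import all_boot all_order all_algebra.
From mathcomp Require Import all_classical all_reals all_analysis.
From mathcomp Require mpoly.
(* activate the canonical instances of mpoly without importing its notations *)
Canonical mpoly.mpoly_mcoeff__canonical__Algebra_Additive.
Canonical mpoly.mpoly_mcoeff__canonical__GRing_LRMorphism.
Canonical mpoly.mpoly_mcoeff__canonical__GRing_Linear.
Canonical mpoly.mpoly_mcoeff__canonical__GRing_RMorphism.
Canonical mpoly.mpoly_meval__canonical__Algebra_Additive.
Canonical mpoly.mpoly_meval__canonical__GRing_LRMorphism.
Canonical mpoly.mpoly_meval__canonical__GRing_Linear.
Canonical mpoly.mpoly_meval__canonical__GRing_RMorphism.
Canonical mpoly.mpoly_mpoly__canonical__Algebra_AddMagma.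
Canonical mpoly.mpoly_mpoly__canonical__Algebra_AddSemigroup.
Canonical mpoly.mpoly_mpoly__canonical__Algebra_AddUMagma.
Canonical mpoly.mpoly_mpoly__canonical__Algebra_BaseAddMagma.
Canonical mpoly.mpoly_mpoly__canonical__Algebra_BaseAddUMagma.
Canonical mpoly.mpoly_mpoly__canonical__Algebra_BaseZmodule.
Canonical mpoly.mpoly_mpoly__canonical__Algebra_ChoiceBaseAddMagma.
Canonical mpoly.mpoly_mpoly__canonical__Algebra_ChoiceBaseAddUMagma.
Canonical mpoly.mpoly_mpoly__canonical__Algebra_Nmodule.
Canonical mpoly.mpoly_mpoly__canonical__Algebra_Zmodule.
Canonical mpoly.mpoly_mpoly__canonical__GRing_Algebra.
Canonical mpoly.mpoly_mpoly__canonical__GRing_ComAlgebra.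
Canonical mpoly.mpoly_mpoly__canonical__GRing_ComNzRing.
Canonical mpoly.mpoly_mpoly__canonical__GRing_ComNzSemiRing.
Canonical mpoly.mpoly_mpoly__canonical__GRing_ComPzRing.
Canonical mpoly.mpoly_mpoly__canonical__GRing_ComPzSemiRing.
Canonical mpoly.mpoly_mpoly__canonical__GRing_ComSemiAlgebra.
Canonical mpoly.mpoly_mpoly__canonical__GRing_ComUnitAlgebra.
Canonical mpoly.mpoly_mpoly__canonical__GRing_ComUnitRing.
Canonical mpoly.mpoly_mpoly__canonical__GRing_IntegralDomain.
Canonical mpoly.mpoly_mpoly__canonical__GRing_LSemiAlgebra.
Canonical mpoly.mpoly_mpoly__canonical__GRing_LSemiModule.
Canonical mpoly.mpoly_mpoly__canonical__GRing_Lalgebra.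
Canonical mpoly.mpoly_mpoly__canonical__GRing_Lmodule.
Canonical mpoly.mpoly_mpoly__canonical__GRing_NzRing.
Canonical mpoly.mpoly_mpoly__canonical__GRing_NzSemiRing.
Canonical mpoly.mpoly_mpoly__canonical__GRing_PzRing.
Canonical mpoly.mpoly_mpoly__canonical__GRing_PzSemiRing.
Canonical mpoly.mpoly_mpoly__canonical__GRing_SemiAlgebra.
Canonical mpoly.mpoly_mpoly__canonical__GRing_UnitAlgebra.
Canonical mpoly.mpoly_mpoly__canonical__GRing_UnitRing.
Canonical mpoly.mpoly_mpoly__canonical__choice_Choice.
Canonical mpoly.mpoly_mpoly__canonical__choice_SubChoice.
Canonical mpoly.mpoly_mpoly__canonical__eqtype_Equality.
Canonical mpoly.mpoly_mpoly__canonical__eqtype_SubEquality.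
Canonical mpoly.mpoly_mpoly__canonical__eqtype_SubType.
Canonical mpoly.mpoly_multinom__canonical__Order_BDistrLattice.
Canonical mpoly.mpoly_multinom__canonical__Order_BJoinSemilattice.
Canonical mpoly.mpoly_multinom__canonical__Order_BLattice.
Canonical mpoly.mpoly_multinom__canonical__Order_BMeetSemilattice.
Canonical mpoly.mpoly_multinom__canonical__Order_BPOrder.
Canonical mpoly.mpoly_multinom__canonical__Order_BPreorder.
Canonical mpoly.mpoly_multinom__canonical__Order_BTotal.
Canonical mpoly.mpoly_multinom__canonical__Order_DistrLattice.
Canonical mpoly.mpoly_multinom__canonical__Order_JoinSemilattice.
Canonical mpoly.mpoly_multinom__canonical__Order_Lattice.
Canonical mpoly.mpoly_multinom__canonical__Order_MeetSemilattice.
Canonical mpoly.mpoly_multinom__canonical__Order_POrder.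
Canonical mpoly.mpoly_multinom__canonical__Order_Preorder.
Canonical mpoly.mpoly_multinom__canonical__Order_Total.
Canonical mpoly.mpoly_multinom__canonical__choice_Choice.
Canonical mpoly.mpoly_multinom__canonical__choice_Countable.
Canonical mpoly.mpoly_multinom__canonical__choice_SubChoice.
Canonical mpoly.mpoly_multinom__canonical__choice_SubCountable.
Canonical mpoly.mpoly_multinom__canonical__eqtype_Equality.
Canonical mpoly.mpoly_multinom__canonical__eqtype_SubEquality.
Canonical mpoly.mpoly_multinom__canonical__eqtype_SubType.
Set Implicit Arguments. Unset Strict Implicit. Unset Printing Implicit Defensive.
Import Order.TTheory GRing.Theory Num.Theory.
Import numFieldNormedType.Exports.
Local Open Scope classical_set_scope.
Local Open Scope ring_scope.

Section Defs.
Variable R : realType.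
Local Notation mu := (@lebesgue_measure R).
Local Notation I01 := (`[(0:R), 1]%classic : set R).

Definition null01 (A : set R) : Prop := A `<=` I01 /\ mu.-negligible A.

Definition initial_ordinal (d : Order.disp_t) (K : orderType d) : Prop :=
  well_founded (fun a b : K => (a < b)%O) /\
  forall a : K, card_le [set b : K | (b < a)%O] [set: K] /\
                ~ card_le [set: K] [set b : K | (b < a)%O].

Definition card_lt (I K : Type) : Prop :=
  card_le [set: I] [set: K] /\ ~ card_le [set: K] [set: I].

Definition card_is_addN (K : Type) : Prop :=
  (exists N : K -> set R, (forall k, null01 (N k)) /\
      ~ null01 (\bigcup_(k in [set: K]) N k)) /\
  (forall (I : Type) (N : I -> set R), card_lt I K ->
      (forall i, null01 (N i)) -> null01 (\bigcup_(i in [set: I]) N i)).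

Definition card_is_covN (K : Type) : Prop :=
  (exists N : K -> set R, (forall k, null01 (N k)) /\
      I01 `<=` \bigcup_(k in [set: K]) N k) /\
  (forall (I : Type) (N : I -> set R), card_lt I K ->
      (forall i, null01 (N i)) -> ~ (I01 `<=` \bigcup_(i in [set: I]) N i)).

Definition kconv (d : Order.disp_t) (K : orderType d) (T : topologicalType)
  (x : K -> T) (l : T) : Prop :=
  forall U, nbhs l U -> exists a0 : K, forall a : K, (a0 < a)%O -> U (x a).

Definition meas01 (f : R -> R) : Prop := measurable_fun I01 f.

Definition integrable01 (f : R -> R) : Prop := mu.-integrable I01 (EFin \o f).

Definition kconv_ae (d : Order.disp_t) (K : orderType d)
  (fs : K -> R -> R) (f : R -> R) : Prop :=
  {ae mu, forall t, I01 t -> kconv (fun a => fs a t) (f t)}.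

Definition kconv_measure (d : Order.disp_t) (K : orderType d)
  (fs : K -> R -> R) (f : R -> R) : Prop :=
  forall eps : R, 0 < eps ->
    kconv (fun a => mu [set t | I01 t /\ eps <= `|fs a t - f t|]) (0%E : \bar R).

Definition ANM (d : Order.disp_t) (K : orderType d) (fs : K -> R -> R) : Prop :=
  (forall a, meas01 (fs a)) /\
  exists f : R -> R, meas01 f /\ kconv_ae fs f /\ ~ kconv_measure fs f.

Definition ND (d : Order.disp_t) (K : orderType d) (fs : K -> R -> R) : Prop :=
  (forall a, meas01 (fs a)) /\
  (exists g : R -> R, integrable01 g /\
     forall a, {ae mu, forall t, I01 t -> `|fs a t| <= g t}) /\
  exists f : R -> R, integrable01 f /\ kconv_ae fs f /\
     ~ kconv (fun a => (\int[mu]_(t in I01) (`|fs a t - f t|)%:E)%E) (0%E : \bar R).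

(** element of the algebra (R^[0,1])^K obtained by evaluating a polynomial
    (indexwise and pointwise) at the n elements xs of the algebra *)
Definition peval (T : Type) (n : nat) (P : mpoly.mpoly n R)
  (xs : 'I_n -> T -> R -> R) : T -> R -> R :=
  fun a t => mpoly.meval (fun i => xs i a t) P.

(** strong algebrability of S in (R^[0,1])^K, with generators indexed by a
    type G (the cardinality of the generating set is |G|): an injective family
    of generators, algebraically independent, every nonzero element of the
    (non-unital) generated algebra lying in S. *)
Definition strongly_algebrable (T G : Type) (S : (T -> R -> R) -> Prop) : Prop :=
  exists gen : G -> (T -> R -> R),
    injective gen /\
    forall (n : nat) (v : 'I_n -> G) (P : mpoly.mpoly n R),
      injective v -> P != 0 -> mpoly.mcoeff (@mpoly.mnm0 n) P = 0 ->
      let x := peval P (fun i => gen (v i)) in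
      (exists a, exists t, I01 t /\ x a t <> 0) /\ S x.

End Defs.

(* Main.v *)
Require Import Defs.
From HB Require Import structures.
From mathcomp Require Import all_boot all_order all_algebra.
From mathcomp Require Import all_classical all_reals all_analysis.
From mathcomp Require mpoly.
From mathcomp Require Import ring lra.
From mathcomp Require Import measurable_realfun.
Set Implicit Arguments. Unset Strict Implicit. Unset Printing Implicit Defensive.
Import Order.TTheory GRing.Theory Num.Theory.
Import numFieldNormedType.Exports.
Import Num.Def.
Local Open Scope classical_set_scope.
Local Open Scope ring_scope.
Section Ev.
Variable R : realType.
Definition ev (P : R -> Prop) := exists U : R, forall u, U <= u -> P u.

Lemma ev_and (P Q : R -> Prop) : ev P -> ev Q -> ev (fun u => P u /\ Q u).
Proof.
move=> [U1 h1] [U2 h2]; exists (maxr U1 U2) => u; rewrite ge_max => /andP[a b].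
by split; [apply: h1|apply: h2].
Qed.

Lemma ev_mono (P Q : R -> Prop) : (forall u, P u -> Q u) -> ev P -> ev Q.
Proof. by move=> h [U hU]; exists U => u /hU /h. Qed.

Lemma ev_ge (a : R) : ev (fun u => a <= u).
Proof. by exists a. Qed.

Lemma ev_seq (X : eqType) (s : seq X) (P : X -> R -> Prop) :
  (forall x, x \in s -> ev (P x)) -> ev (fun u => forall x, x \in s -> P x u).
Proof.
elim: s => [|a s IH] h; first by exists 0.
have hs : forall x, x \in s -> ev (P x).
  by move=> x xs; apply: h; rewrite in_cons xs orbT.
apply: ev_mono (ev_and (h a (mem_head _ _)) (IH hs)) => u [h1 h2] x.
by rewrite in_cons => /orP[/eqP->//|]; exact: h2.
Qed.

Lemma seq_argmax (X : eqType) (s : seq X) (f : X -> R) :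
  s != [::] -> exists2 x, x \in s & forall y, y \in s -> f y <= f x.
Proof.
elim: s => [//|a s IH] _.
have [->|sn] := eqVneq s [::].
  by exists a; [exact: mem_head| move=> y; rewrite inE => /eqP->].
have [x xs hx] := IH sn.
have [h|h] := leP (f a) (f x).
  exists x; first by rewrite in_cons xs orbT.
  by move=> y; rewrite in_cons => /orP[/eqP->//|]; exact: hx.
exists a; first exact: mem_head.
move=> y; rewrite in_cons => /orP[/eqP->//|/hx hy]; exact: (le_trans hy (ltW h)).
Qed.

Lemma seq_posmin (X : eqType) (s : seq X) (f : X -> R) :
  (forall x, x \in s -> 0 < f x) -> exists2 c, 0 < c & forall x, x \in s -> c <= f x.
Proof.
elim: s => [|a s IH] h; first by exists 1.
have h' : forall x, x \in s -> 0 < f x by move=> x xs; apply: h; rewrite in_cons xs orbT.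
have [c c0 hc] := IH h'.
have ha := h a (mem_head _ _).
exists (minr c (f a)); first by rewrite lt_min c0 ha.
move=> x; rewrite in_cons => /orP[/eqP->|/hc xs]; first by rewrite ge_min lexx orbT.
by rewrite ge_min xs.
Qed.
End Ev.
Section Pair.
Variable R : realType.

Lemma expR_ge_id (u : R) : u <= expR u.
Proof. have := expR_ge1Dx u; lra. Qed.

Lemma pair_ev n (p : 'I_n -> R) (hp : injective p) (hp1 : forall i, 1 <= p i)
  (d : 'I_n -> R) (i0 : 'I_n) (hi0 : d i0 != 0)
  (hd : forall i, d i != 0 -> 1 <= `|d i|) (L : R) :
  ev (fun u => L <= `|\sum_i d i * expR (p i * u)|).
Proof.
have ne : [seq i <- enum 'I_n | d i != 0] != [::].
  apply/eqP => /(f_equal (fun s => i0 \in s)); by rewrite mem_filter hi0 mem_enum.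
have [j] := seq_argmax p ne.
rewrite mem_filter mem_enum andbT => hj hjmax.
have n0 : (0 < n%:R :> R) by rewrite ltr0n; case: (n) (i0) => [[]|].
have key : forall i, i != j -> ev (fun u =>
    `|d i| * expR (p i * u) <= expR (p j * u) / (2 * n%:R)).
  move=> i ij.
  have [di0|di] := eqVneq (d i) 0.
    by exists 0 => u _; rewrite di0 normr0 mul0r divr_ge0 ?expR_ge0 // mulr_ge0 // ltW.
  have pij : p i < p j.
    have hle : p i <= p j by apply: hjmax; rewrite mem_filter di mem_enum.
    rewrite lt_neqAle hle andbT.
    by apply/eqP => /hp hij; move: ij; rewrite hij eqxx.
  set g := p j - p i.
  have g0 : 0 < g.
    rewrite /g subr_gt0. exact: pij.
  exists (maxr 0 (2 * n%:R * `|d i| / g)) => u; rewrite ge_max => /andP[u0 hu].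
  rewrite ler_pdivlMr ?mulr_gt0 //.
  have -> : p j * u = p i * u + g * u by rewrite /g; ring.
  rewrite expRD.
  have : 2 * n%:R * `|d i| <= g * u.
    by rewrite -(ler_pdivrMl _ _ g0) mulrC.
  have := expR_ge_id (g * u).
  have := expR_ge0 (p i * u).
  have := normr_ge0 (d i).
  nra.
have H1 : ev (fun u => forall i, i \in enum 'I_n -> i != j ->
    `|d i| * expR (p i * u) <= expR (p j * u) / (2 * n%:R)).
  apply: ev_seq => i _.
  have [->|ij] := eqVneq i j; first by exists 0 => u _ /eqP.
  by apply: ev_mono (key i ij) => u h _.
have [U hU] := ev_and H1 (ev_ge (maxr 0 (2 * L))).
exists U => u /hU [h1]; rewrite ge_max => /andP[u0 uL].
set e := expR (p j * u).
have e0 : 0 < e by exact: expR_gt0.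
have h1' : forall i, i != j -> `|d i * expR (p i * u)| <= e / (2 * n%:R).
  move=> i ij; have := h1 i (mem_enum _ _) ij.
  by rewrite normrM (ger0_norm (expR_ge0 _)).
rewrite (bigD1 j) //=.
set r := \sum_(i | i != j) _.
have hr : `|r| <= e / 2.
  apply: le_trans (ler_norm_sum _ _ _) _.
  apply: le_trans (_ : \sum_(i | i != j) e / (2 * n%:R) <= _).
    by apply: ler_sum => i ij; exact: h1'.
  have c0 : 0 <= e / (2 * n%:R) by rewrite divr_ge0 ?mulr_ge0 ?ltW.
  apply: le_trans (_ : \sum_(i < n) e / (2 * n%:R) <= _).
    by rewrite [leRHS](bigD1 j) //= lerDr.
  rewrite sumr_const card_ord -mulr_natr.
  rewrite le_eqVlt; apply/orP; left; apply/eqP; field; by rewrite gt_eqF.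
have he : expR u <= e.
  by rewrite ler_expR; have := hp1 j; nra.
have hdj : 1 <= `|d j| by apply: hd.
have hu := expR_ge_id u.
have : `|d j * e| <= `|d j * e + r| + `|r|.
  by have := ler_normB (d j * e + r) r; rewrite addrK.
rewrite normrM (gtr0_norm e0).
nra.
Qed.
End Pair.
Section Dom.
Variable R : realType.

Lemma natdiff_ge1 (a b : nat) : a != b -> 1 <= `|a%:R - b%:R : R|.
Proof.
move=> ab; have [lab|lba] := leqP a b.
  have lt : (a < b)%N by rewrite ltn_neqAle ab lab.
  by rewrite distrC -natrB // ger0_norm ?ler0n // ler1n subn_gt0.
by rewrite -natrB ?(ltnW lba) // ger0_norm ?ler0n // ler1n subn_gt0.
Qed.

Lemma natdiff_neq0 (a b : nat) : (a%:R - b%:R : R) != 0 = (a != b).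
Proof. by rewrite subr_eq0 eqr_nat. Qed.

Definition Eexp n (p : 'I_n -> R) (m : mpoly.multinom n) (u : R) :=
  \sum_i (mpoly.fun_of_multinom m i)%:R * expR (p i * u).

Lemma expR_cube (w : R) : 0 <= w -> w ^+ 3 / 27 <= expR w.
Proof.
move=> w0.
have -> : expR w = expR (w / 3) ^+ 3 by rewrite -expRM_natl; congr expR; field.
have h := expR_ge1Dx (w / 3).
have h0 : 0 <= w / 3 by rewrite divr_ge0.
have : (w / 3) ^+ 3 <= expR (w / 3) ^+ 3.
  by rewrite lerXn2r ?nnegrE ?expR_ge0 //; lra.
have -> : (w / 3) ^+ 3 = w ^+ 3 / 27 by field.
done.
Qed.

Lemma dom n (P : mpoly.mpoly n R) (p : 'I_n -> R) (hp : injective p)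
  (hp1 : forall i, 1 <= p i) (P0 : mpoly.mcoeff (@mpoly.mnm0 n) P = 0)
  (Pn0 : P != 0) :
  ev (fun u => expR u ^+ 2 <= `|mpoly.meval (fun i => expR (expR (p i * u))) P|).
Proof.
have hmev : forall u, mpoly.meval (fun i => expR (expR (p i * u))) P =
    \sum_(m <- mpoly.msupp P) mpoly.mcoeff m P * expR (Eexp p m u).
  move=> u; rewrite mpoly.mevalE; apply: eq_bigr => m _; congr (_ * _).
  by rewrite /Eexp expR_sum; apply: eq_bigr => i _; rewrite expRM_natl.
have sne : mpoly.msupp P != [::].
  apply/eqP => hs; move/eqP: Pn0; apply.
  by rewrite (mpoly.mpolyE P) hs big_nil.
have hcp : forall m, m \in mpoly.msupp P -> 0 < `|mpoly.mcoeff m P|.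
  by move=> m; rewrite mpoly.mcoeff_msupp normr_gt0.
have [c c0 hc] := seq_posmin hcp.
set S := \sum_(m <- mpoly.msupp P) `|mpoly.mcoeff m P|.
have S0 : 0 <= S by rewrite /S sumr_ge0.
set L := 2 * S / c.
have H2 : ev (fun u => forall m, m \in mpoly.msupp P -> forall m', m' \in mpoly.msupp P ->
    m != m' -> L <= `|Eexp p m u - Eexp p m' u|).
  apply: ev_seq => m _; apply: ev_seq => m' _.
  have [<-|mm'] := eqVneq m m'; first by exists 0 => u _ /eqP.
  have [i0 hi0] : exists i, mpoly.fun_of_multinom m i != mpoly.fun_of_multinom m' i.
    apply: contrapT => hn; move/eqP: mm'; apply; apply/mpoly.mnmP => i.
    apply/eqP; apply: contrapT => hne; apply: hn; exists i; exact/negP.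
  have := @pair_ev R n p hp hp1 (fun i => (mpoly.fun_of_multinom m i)%:R -
     (mpoly.fun_of_multinom m' i)%:R) i0.
  rewrite natdiff_neq0 => /(_ hi0) h.
  have {h} := h (fun i => ltac:(rewrite natdiff_neq0; exact: natdiff_ge1)) L.
  apply: ev_mono => u hu _; move: hu; congr (_ <= `|_|).
  rewrite /Eexp -sumrB; apply: eq_bigr => i _; by rewrite mulrBl.
have [m0 m0s] : exists m0, m0 \in mpoly.msupp P.
  by case: (mpoly.msupp P) sne => [//|a l _]; exists a; exact: mem_head.
have [k hk] : exists k, mpoly.fun_of_multinom m0 k != 0%N.
  apply: contrapT => hn.
  have : m0 = @mpoly.mnm0 n.
    apply/mpoly.mnmP => i; rewrite mpoly.mnm0E; apply/eqP.
    apply: contrapT => hne; apply: hn; exists i; exact/negP.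
  by move=> h0; move: m0s; rewrite h0 mpoly.mcoeff_msupp P0 eqxx.
have [U hU] := ev_and H2 (ev_ge (maxr 1 (54 / c))).
exists U => u /hU [h2]; rewrite ge_max => /andP[u1 uc].
have u0 : 0 <= u by lra.
rewrite hmev.
have [ms mss hmax] := seq_argmax (fun m => Eexp p m u) sne.
rewrite (bigD1_seq ms mss (mpoly.msupp_uniq P)) /=.
set r := \sum_(m <- _ | _) _.
set es := Eexp p ms u.
have hpt : forall m, m \in mpoly.msupp P -> m != ms ->
    `|mpoly.mcoeff m P * expR (Eexp p m u)| <= `|mpoly.mcoeff m P| * (expR es / expR L).
  move=> m ms' mms; rewrite normrM (ger0_norm (expR_ge0 _)).
  apply: ler_wpM2l => //; rewrite -expRB ler_expR.
  have hm1 := hmax m ms'.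
  have := h2 ms mss m ms'; rewrite eq_sym mms => /(_ isT).
  rewrite ger0_norm ?subr_ge0 // -/es; lra.
have hr : `|r| <= S * (expR es / expR L).
  apply: le_trans (ler_norm_sum _ _ _) _.
  rewrite big_seq_cond.
  apply: le_trans (_ : \sum_(m <- mpoly.msupp P | (m \in mpoly.msupp P) && (m != ms))
      `|mpoly.mcoeff m P| * (expR es / expR L) <= _).
    by apply: ler_sum => m /andP[a b]; exact: hpt.
  rewrite -big_seq_cond /S mulr_suml [X in _ <= X](bigD1_seq ms mss (mpoly.msupp_uniq P)) /=.
  by rewrite lerDr mulr_ge0 ?divr_ge0 ?expR_ge0.
have hE0 : expR u <= Eexp p m0 u.
  rewrite /Eexp (bigD1 k) //=.
  apply: le_trans (_ : (mpoly.fun_of_multinom m0 k)%:R * expR (p k * u) <= _); last first.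
    by rewrite lerDl sumr_ge0 // => i _; rewrite mulr_ge0 ?ler0n ?expR_ge0.
  have hk1 : 1 <= (mpoly.fun_of_multinom m0 k)%:R :> R by rewrite ler1n lt0n.
  have : expR u <= expR (p k * u) by rewrite ler_expR; have := hp1 k; nra.
  have := expR_ge0 u; nra.
have hEs : expR (expR u) <= expR es.
  by rewrite ler_expR; apply: le_trans hE0 (hmax m0 m0s).
have hcs := hc ms mss.
set E := expR es.
have E0 : 0 < E by exact: expR_gt0.
have hL : S / expR L <= c / 2.
  rewrite ler_pdivrMr ?expR_gt0 //.
  have := expR_ge1Dx L; rewrite /L => h.
  have : c / 2 * (1 + 2 * S / c) = c / 2 + S by field; rewrite gt_eqF.
  have : 0 <= c / 2 by rewrite divr_ge0 ?ltW.
  nra.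
have hr' : `|r| <= c / 2 * E.
  apply: le_trans hr _; rewrite mulrA mulrAC; apply: ler_wpM2r; first exact: ltW.
  exact: hL.
have h3 : `|mpoly.mcoeff ms P * E| <= `|mpoly.mcoeff ms P * E + r| + `|r|.
  by have := ler_normB (mpoly.mcoeff ms P * E + r) r; rewrite addrK.
rewrite normrM (gtr0_norm E0) in h3.
have hw := expR_cube (expR_ge0 u).
have hw1 := expR_ge1Dx u.
set w := expR u in hw hw1 hEs *.
have hcw : 54 <= c * w.
  have : 54 / c <= w by lra.
  by rewrite ler_pdivrMr // mulrC.
have hw0 : 0 <= w by lra.
have h4 : w ^+ 2 <= c / 2 * (w ^+ 3 / 27).
  have -> : c / 2 * (w ^+ 3 / 27) = w ^+ 2 * (c * w / 54) by field.
  by rewrite ler_peMr ?exprn_ge0 // ler_pdivlMr // mul1r.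
have h5 : w ^+ 3 / 27 <= E by exact: le_trans hw hEs.
have h6 : c / 2 * (w ^+ 3 / 27) <= c / 2 * E by rewrite ler_wpM2l // divr_ge0 ?ltW.
have h7 : c * E <= `|mpoly.mcoeff ms P| * E by rewrite ler_wpM2r // ltW.
lra.
Qed.
End Dom.
Section Q.
Variable R : realType.

Definition phi (q t : R) : R := expR (expR (q * - ln t)).
Definition Qf n (P : mpoly.mpoly n R) (q : 'I_n -> R) (t : R) : R :=
  mpoly.meval (fun i => phi (q i) t) P.

Lemma phi_meas q : measurable_fun [set: R] (phi q).
Proof.
rewrite /phi.
apply: measurableT_comp; first exact: measurable_expR.
apply: measurableT_comp; first exact: measurable_expR.
apply: measurableT_comp; first exact: mulrl_measurable.
apply: measurableT_comp; first exact: oppr_measurable.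
exact: measurable_ln.
Qed.

Lemma Qf_meas n (P : mpoly.mpoly n R) q : measurable_fun [set: R] (Qf P q).
Proof.
have -> : Qf P q = fun t => \sum_(m <- mpoly.msupp P)
    (mpoly.mcoeff m P * \prod_i phi (q i) t ^+ mpoly.fun_of_multinom m i).
  by apply/funext => t; rewrite /Qf mpoly.mevalE.
apply: measurable_sum => m.
apply: measurable_funM; first exact: measurable_cst.
apply: measurable_prod => i _.
apply: measurable_funX; exact: phi_meas.
Qed.

Lemma Qf_bound n (P : mpoly.mpoly n R) (q : 'I_n -> R) (hq : injective q)
  (hq1 : forall i, 1 <= q i) (P0 : mpoly.mcoeff (@mpoly.mnm0 n) P = 0)
  (Pn0 : P != 0) :
  exists2 d0, 0 < d0 & forall t, 0 < t -> t <= d0 -> t^-1 ^+ 2 <= `|Qf P q t|.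
Proof.
have [U hU] := dom hq hq1 P0 Pn0.
exists (expR (- U)); first exact: expR_gt0.
move=> t t0 td.
have tpos : t \in Num.pos by rewrite posrE.
have hu : U <= - ln t.
  have : ln t <= ln (expR (- U)).
    by rewrite ler_ln // posrE expR_gt0.
  rewrite expRK; lra.
have := hU _ hu.
by rewrite expRN (lnK tpos).
Qed.

Lemma meval_zero n (P : mpoly.mpoly n R) :
  mpoly.mcoeff (@mpoly.mnm0 n) P = 0 -> mpoly.meval (fun _ => 0) P = 0.
Proof.
move=> P0; rewrite mpoly.mevalE big1_seq // => m /andP[_ ms].
have [k hk] : exists k, mpoly.fun_of_multinom m k != 0%N.
  apply: contrapT => hn.
  have : m = @mpoly.mnm0 n.
    apply/mpoly.mnmP => i; rewrite mpoly.mnm0E; apply/eqP.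
    apply: contrapT => hne; apply: hn; exists i; exact/negP.
  by move=> h0; move: ms; rewrite h0 mpoly.mcoeff_msupp P0 eqxx.
by rewrite (bigD1 k) //= expr0n (negbTE hk) mul0r mulr0.
Qed.
End Q.
Section XM.
Variable R : realType.
Local Notation mu := (@lebesgue_measure R).
Local Notation I01 := (`[(0:R), 1]%classic : set R).
Variables (Q : R -> R) (mQ : measurable_fun [set: R] Q) (d0 : R) (d00 : 0 < d0)
  (hQ : forall t, 0 < t -> t <= d0 -> t^-1 ^+ 2 <= `|Q t|)
  (M : set R) (mM : measurable M) (M0 : mu M = 0%E).

Definition xM t := \1_(~` M) t * Q t.

Lemma xM_meas D : measurable_fun D xM.
Proof.
apply: (measurable_funS (E := [set: R])) => //.
apply: measurable_funM; last exact: mQ.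
by apply: measurable_indic; exact: measurableC.
Qed.

Lemma xM_out t : ~ M t -> xM t = Q t.
Proof. by move=> nM; rewrite /xM indicE mem_set // mul1r. Qed.

Lemma mu_oo (dl : R) : 0 < dl -> mu `]0, dl[ = dl%:E.
Proof. by move=> dl0; rewrite lebesgue_measure_itv /= lte_fin dl0 sube0. Qed.

Lemma muG (dl : R) : 0 < dl -> mu (`]0, dl[ `\` M) = dl%:E.
Proof.
move=> dl0.
rewrite measureD //; last first.
  by rewrite [X in (X < _)%E](_ : _ = dl%:E) ?ltry //; exact: mu_oo.
rewrite [X in (_ - X)%E](_ : _ = 0%E) ?sube0; first exact: mu_oo.
apply/eqP; rewrite eq_le measure_ge0 andbT.
apply: le_trans (_ : mu M <= _)%E; last by rewrite M0.
by apply: le_measure; rewrite ?inE //; exact: measurableI.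
Qed.

Lemma xM_G dl t : dl <= d0 -> (`]0, dl[ `\` M) t -> dl^-1 ^+ 2 <= `|xM t|.
Proof.
move=> dld [/= ht nM]; rewrite xM_out //.
move: ht; rewrite in_itv /= => /andP[t0 tdl].
apply: le_trans (hQ t0 _); last by apply: le_trans dld; exact: ltW.
have dl0 : 0 < dl by apply: lt_trans tdl.
rewrite lerXn2r ?nnegrE ?invr_ge0 ?ltW //.
by rewrite ltf_pV2 ?posrE.
Qed.

Lemma absxM_meas : measurable_fun I01 (fun t => (`|xM t|)%:E).
Proof.
apply/measurable_EFinP; apply: measurableT_comp; first exact: normr_measurable.
exact: xM_meas.
Qed.

Lemma xM_int_big (F : R) : ~ (\int[mu]_(t in I01) (`|xM t|)%:E <= F%:E)%E.
Proof.
set dl := minr (minr d0 1) ((`|F| + 1)^-1).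
have F1 : 0 < `|F| + 1 by rewrite ltr_wpDl.
have dl0 : 0 < dl by rewrite !lt_min d00 ltr01 invr_gt0 F1.
have dld : dl <= d0 by rewrite !ge_min lexx.
have dl1 : dl <= 1 by rewrite !ge_min lexx orbT.
have dlF : dl <= (`|F| + 1)^-1 by rewrite ge_min lexx orbT.
move=> hF.
have mG : measurable (`]0, dl[ `\` M) by apply: measurableD => //; exact: measurable_itv.
have GI : `]0, dl[ `\` M `<=` I01.
  move=> t [/= + _]; rewrite !in_itv /= => /andP[t0 tdl].
  by rewrite (ltW t0) (le_trans (ltW tdl) dl1).
have h1 := ge0_subset_integral mu mG (measurable_itv `[0, 1]) absxM_meas
  (fun t _ => ltac:(by rewrite lee_fin)) GI.
have h2 : (\int[mu]_(t in `]0%R, dl[ `\` M) (dl^-1 ^+ 2)%:E <=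
    \int[mu]_(t in `]0%R, dl[ `\` M) (`|xM t|)%:E)%E.
  apply: ge0_le_integral => //.
  - by move=> t _; rewrite lee_fin exprn_ge0 // invr_ge0 ltW.
  - apply: measurable_funS absxM_meas => //; exact: measurable_itv.
  - by move=> t ht; rewrite lee_fin; exact: xM_G.
rewrite integral_cst // in h2.
rewrite [X in (_ * X)%E](_ : _ = dl%:E) in h2; last exact: muG.
have := le_trans h2 (le_trans h1 hF).
rewrite -EFinM lee_fin.
have -> : dl^-1 ^+ 2 * dl = dl^-1 by rewrite expr2 -mulrA mulVf ?gt_eqF // mulr1.
have : `|F| + 1 <= dl^-1 by rewrite -[X in X <= _]invrK lef_pV2 ?posrE ?invr_gt0.
have := ler_norm F.
lra.
Qed.

Lemma xM_meas_big :
  ((minr d0 (2^-1))%:E <= mu [set t | I01 t /\ (1 <= `|xM t - 0|)%R])%E.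
Proof.
set dl := minr d0 (2^-1).
have dl0 : 0 < dl by rewrite lt_min d00 invr_gt0 ltr0n.
have dld : dl <= d0 by rewrite ge_min lexx.
have dl2 : dl <= 2^-1 by rewrite ge_min lexx orbT.
have mG : measurable (`]0, dl[ `\` M) by apply: measurableD => //; exact: measurable_itv.
have mS : measurable [set t | I01 t /\ 1 <= `|xM t - 0|].
  have mf : measurable_fun I01 (fun t => `|xM t - 0|).
    apply: measurableT_comp; first exact: normr_measurable.
    apply: measurable_funB; [exact: xM_meas | exact: measurable_cst].
  have := mf (measurable_itv `[0, 1]) _ (measurable_itv `[1, +oo[).
  congr measurable; apply/seteqP; split => t /=.
    by move=> [h1 h2]; split => //; move: h2; rewrite in_itv /= ?andbT.
  by move=> [h1 h2]; split => //; rewrite in_itv /= ?andbT.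
rewrite -(muG dl0).
apply: le_measure; rewrite ?inE //.
move=> t ht; split.
  move: ht => [/= + _]; rewrite !in_itv /= => /andP[t0 tdl].
  by rewrite (ltW t0) (le_trans (ltW tdl)) // (le_trans dl2) // invf_le1 ?ler1n.
have := xM_G dld ht; rewrite subr0.
have : 2 <= dl^-1 by rewrite -[X in X <= _]invrK lef_pV2 ?posrE ?invr_gt0.
move=> h2 h3; apply: le_trans h3.
have : 0 <= dl^-1 by rewrite invr_ge0 ltW.
nra.
Qed.
End XM.

Lemma out_point (R : realType) (M : set R) : measurable M ->
  lebesgue_measure M = 0%E -> exists t : R, (0 < t < 1) /\ ~ M t.
Proof.
move=> mM M0; apply: contrapT => hn.
have : lebesgue_measure (`]0, 1[ `\` M) = 1%:E.
  rewrite (muG mM M0 ltr01) //.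
have -> : `]0, (1:R)[ `\` M = set0.
  apply/seteqP; split => [t [/= h1 h2]|//]; apply: hn; exists t; split => //.
by rewrite measure0 => /eqP; rewrite eq_sym onee_eq0.
Qed.

Section Setup.
Variable R : realType.
Local Notation mu := (@lebesgue_measure R).
Local Notation I01 := (`[(0:R), 1]%classic : set R).

Lemma null01U (A B : set R) : null01 A -> null01 B -> null01 (A `|` B).
Proof.
move=> [AI An] [BI Bn]; split; last exact: negligibleU.
by move=> t [/AI|/BI].
Qed.

Lemma null01S (A B : set R) : null01 B -> A `<=` B -> null01 A.
Proof. by move=> [BI Bn] AB; split; [exact: subset_trans BI|exact: negligibleS Bn]. Qed.

Variables (d : Order.disp_t) (K : orderType d) (hK : initial_ordinal K)
  (hA : card_is_addN R K) (hC : card_is_covN R K).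

Lemma seg_null (N : K -> set R) : (forall k, null01 (N k)) ->
  forall a, null01 (\bigcup_(b in [set b : K | (b < a)%O]) N b).
Proof.
move=> hN a.
have hlt : card_lt [set b : K | (b < a)%O] K.
  have [h1 h2] := hK.2 a; split.
    by rewrite (card_le_eql (card_setT _)).
  by rewrite (card_le_eqr (card_setT _)).
have := hA.2 _ (fun i => N (val i)) hlt (fun i => hN _).
move=> h; rewrite bigcup_set_type; exact: h.
Qed.

Lemma K_nomax (a : K) : exists b, (a < b)%O.
Proof.
apply: contrapT => hn.
have [Nn [hNn hU]] := hA.1.
apply: hU.
apply: (@null01S _ ((\bigcup_(b in [set b : K | (b < a)%O]) Nn b) `|` Nn a)).
  apply: null01U => //; exact: seg_null.
move=> t [k _ hk]; have [ka|ak|ka] := ltgtP k a.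
- by left; exists k.
- by exfalso; apply: hn; exists k.
- by right; rewrite -ka.
Qed.

Lemma K_elem : exists a : K, True.
Proof.
apply: contrapT => hn.
have [Nn [hNn hU]] := hA.1.
apply: hU; apply: (@null01S _ set0).
  by split => //; exact: negligible_set0.
by move=> t [k _ _]; apply: hn; exists k.
Qed.

Lemma K_M : exists M : K -> set R,
  (forall a, measurable (M a) /\ mu (M a) = 0%E) /\
  (forall t, I01 t -> exists b : K, forall a, (b < a)%O -> M a t).
Proof.
have [N [hN hcov]] := hC.1.
have h : forall a : K, exists B : set R, [/\ measurable B, mu B = 0%E &
    \bigcup_(b in [set b : K | (b < a)%O]) N b `<=` B].
  move=> a; have [_ [B [mB B0 sB]]] := seg_null hN a.
  by exists B.
have [M hM] := choice h.
exists M; split; first by move=> a; have [] := hM a.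
move=> t /hcov [b _ hb]; exists b => a ba.
by have [_ _] := hM a; apply; exists b.
Qed.
End Setup.
Lemma indic_in (R : realType) (A : set R) t : A t -> \1_A t = 1 :> R.
Proof. by move=> h; rewrite indicE mem_set. Qed.

Lemma indic_out (R : realType) (A : set R) t : ~ A t -> \1_A t = 0 :> R.
Proof. by move=> h; rewrite indicE memNset. Qed.

Lemma mul_true (R : realType) (a b : R) : true%:R * a = true%:R * b -> a = b.
Proof. by rewrite !mul1r. Qed.

Theorem mainTheorem12 (R : realType) (d : Order.disp_t) (K : orderType d) :
  initial_ordinal K ->
  card_is_addN R K -> card_is_covN R K ->
  @strongly_algebrable R K R
    (fun fs => ANM fs /\ ~ ND fs).
Proof.
move=> hK hA hC.
have [a0 _] := K_elem hA.
have nomax := K_nomax hK hA.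
have [M [hM hcov]] := K_M hK hA hC.
pose pr (r : R) := 1 + expR r.
have pr_inj : injective pr by move=> x y /addrI /expR_inj.
have pr1 : forall r, 1 <= pr r by move=> r; rewrite /pr lerDl expR_ge0.
pose gen (r : R) (a : K) (t : R) := \1_(~` M a) t * phi (pr r) t.
exists gen; split.
  move=> r r' e.
  have [t [/andP[t0 t1] nM]] := out_point (hM a0).1 (hM a0).2.
  have e1 : gen r a0 t = gen r' a0 t by rewrite e.
  move: e1; rewrite /gen indicE mem_set; last exact: nM.
  move/mul_true; rewrite /phi => /expR_inj /expR_inj /mulIf h.
  apply: pr_inj; apply: h.
  rewrite oppr_eq0; apply/eqP => ht.
  have tp : t \in Num.pos by rewrite posrE.
  have : t = 1 by rewrite -(lnK tp) ht expR0.
  by move=> t1'; move: t1; rewrite t1' ltxx.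
move=> n v P vinj Pn0 P0 x.
set q := fun i => pr (v i).
have qinj : injective q by move=> i j /pr_inj /vinj.
have [d0 d00 hQ] := Qf_bound qinj (fun i => pr1 _) P0 Pn0.
have mQ := Qf_meas P q.
have ex : x = fun a => xM (Qf P q) (M a).
  apply/funext => a; apply/funext => t.
  rewrite /x /peval /xM /Qf.
  case: (pselect (M a t)) => h.
    rewrite (indic_out (A := ~` M a)); last by move/(_ h).
    rewrite mul0r (mpoly.meval_eq (v2 := fun _ => 0)); first exact: meval_zero.
    by move=> i; rewrite /gen (indic_out (A := ~` M a)) ?mul0r // => /(_ h).
  rewrite (indic_in (A := ~` M a)) // mul1r.
  by apply: mpoly.meval_eq => i; rewrite /gen (indic_in (A := ~` M a)) // mul1r.
clearbody x; subst x.
split.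
  exists a0.
  have := xM_meas_big mQ d00 hQ (hM a0).1 (hM a0).2.
  set dl := minr d0 (2^-1) => hbig.
  have dl0 : 0 < dl by rewrite lt_min d00 invr_gt0 ltr0n.
  apply: contrapT => hn.
  have : [set t | `[(0:R), 1]%classic t /\ (1 <= `|xM (Qf P q) (M a0) t - 0|)%R] = set0.
    apply/seteqP; split => // t [It ht]; apply: hn; exists t; split => //.
    by move=> h0; move: ht; rewrite h0 subr0 normr0 ler10.
  move=> hS; move: hbig; rewrite hS measure0 lee_fin.
  by rewrite leNgt dl0.
split.
  split.
    by move=> a; apply: (xM_meas mQ (hM a).1).
  exists (fun _ => 0); split; first exact: measurable_cst.
  split.
    apply: aeW => t It.
    have [b hb] := hcov t It.
    move=> U hU; exists b => a ba.
    rewrite /xM indicE memNset ?mul0r; last by move=> /(_ (hb a ba)).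
    exact: nbhs_singleton hU.
  move=> hcm.
  set dl := minr d0 (2^-1).
  have dl0 : 0 < dl by rewrite lt_min d00 invr_gt0 ltr0n.
  have [a1 ha1] := hcm 1 ltr01 _ (nbhs_open_ereal_lt (f := fun _ : R => dl) dl0).
  have [a ha] := nomax a1.
  have := ha1 a ha; rewrite /=.
  have := xM_meas_big mQ d00 hQ (hM a).1 (hM a).2.
  rewrite -/dl => h1 h2.
  by have := le_lt_trans h1 h2; rewrite ltxx.
move=> [_ [[g [gint gdom]] _]].
have [mg habs] := integrableP _ _ _ gint.
have hle : (\int[lebesgue_measure]_(t in `[0%R, 1%R]) (`|xM (Qf P q) (M a0) t|)%:E <=
    \int[lebesgue_measure]_(t in `[0%R, 1%R]) `|(EFin \o g) t|)%E.
  apply: ae_ge0_le_integral => //.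
  - have h := absxM_meas mQ (hM a0).1. exact: h.
  - apply: measurableT_comp mg; exact: abse_measurable.
  - have FF := ae_filter_ringOfSetsType (@lebesgue_measure R).
    move: (gdom a0); apply: filterS => t h It.
    apply: le_trans (_ : (`|g t|)%:E <= _)%E; last by rewrite -abse_EFin.
    by rewrite lee_fin; apply: le_trans (h It) (ler_norm _).
have hx := xM_int_big mQ d00 hQ (hM a0).1 (hM a0).2
  (F := fine (\int[lebesgue_measure]_(t in `[0%R, 1%R]) `|(EFin \o g) t|)%E).
apply: hx.
rewrite fineK; last by rewrite ge0_fin_numE // integral_ge0.
exact: hle.
Qed.
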